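(* Let $n_1,n_2,n_3$ be integers with $3\le n_1,n_2\le n_3$ and let $W$ be a basic landmark system for $K(\mathbf{n})$. Then $W$ is a resolving set of $K(\mathbf{n})$ if and only if the landmark graph $\mathcal{G}(W)$ contains no bad $4$-cycle, no plain hex, and no shark teeth.
   Context: $K(\mathbf{n})=K_{n_1}\times K_{n_2}\times K_{n_3}$ is the direct product of complete graphs: its vertices are the triples $(x_1,x_2,x_3)$ with $1\le x_i\le n_i$, and two vertices are adjacent iff they differ in every coordinate. $d$ denotes graph distance. A set $W$ of vertices is resolving if for every two distinct vertices $x,y\notin W$ there is $w\in W$ with $d(x,w)\ne d(y,w)$. Landmark graph: for $W$ a set of vertices, let $W_{i,a}=\{w\in W: w_i=a\}$. The landmark graph $\mathcal{G}(W)$ is the hypergraph with vertex set $W$ whose hyperedges are the nonempty sets $W_{i,a}$ ($W_{i,a}$ has color $i$). A hyperedge with exactly two vertices is a stick, with at least three vertices poofy. Basic landmark system: $W$ such that (1) $W_{i,a}\neq\emptyset$ for all $i\in\{1,2,3\}$, $1\le a\le n_i$; (2) $|W_{i,a}|\ge 2$ for all such $i,a$; (3) $|W_{i,a}\cap W_{j,b}|\le 1$ whenever $i\ne j$. Bad $4$-cycle: distinct $w_1,w_2,w_3,w_4\in W$ and $\{i,j,k\}=\{1,2,3\}$ such that $\{w_1,w_2\}$ and $\{w_3,w_4\}$ are both hyperedges of color $i$, $w_2,w_3$ lie in a common hyperedge of color $j$, and $w_4,w_1$ lie in a common hyperedge of color $k$. Plain hex: distinct $w_1,\dots,w_6\in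 W$ and an ordering $(i,j,k)$ of $\{1,2,3\}$ such that $\{w_1,w_2\},\{w_4,w_5\}$ are hyperedges of color $i$, $\{w_2,w_3\},\{w_5,w_6\}$ are hyperedges of color $j$, and $\{w_3,w_4\},\{w_6,w_1\}$ are hyperedges of color $k$. Rainbow $2$-$2$-triangle: distinct $w_1,w_2,w_3\in W$ and $\{i,j,k\}=\{1,2,3\}$ such that $\{w_1,w_2\}$ is a hyperedge of color $i$, $\{w_2,w_3\}$ is a hyperedge of color $j$, and $w_1,w_3$ (the termini) lie in a common hyperedge of color $k$. Shark teeth: two rainbow $2$-$2$-triangles with the same colors $i,j,k$ on disjoint vertex sets whose four termini all belong to the same poofy hyperedge of color $k$. *)

(* Defs.v *)
From mathcomp Require Import all_boot.
Set Implicit Arguments. Unset Strict Implicit. Unset Printing Implicit Defensive.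

Fixpoint walkn (T : finType) (e : rel T) (k : nat) (x y : T) : bool :=
  match k with
  | 0 => x == y
  | k'.+1 => [exists z, e x z && walkn e k' z y]
  end.

(* Shortest-path distance: least k < #|T| admitting a walk of length k
   (a shortest walk, if any, has length < #|T|); returns #|T| (acting as
   "infinity") if y is unreachable from x. *)
Definition gdist (T : finType) (e : rel T) (x y : T) : nat :=
  find (fun k => walkn e k x y) (iota 0 #|T|).

Section Kn.
Variables n1 n2 n3 : nat.

(* Vertices of K(n) = K_{n1} x K_{n2} x K_{n3}; coordinates are 0-based,
   colors 1,2,3 are represented by i : 'I_3 = {0,1,2}. *)
Definition KV := ('I_n1 * 'I_n2 * 'I_n3)%type.

Definition coord (i : 'I_3) (v : KV) : nat :=
  match val i with
  | 0 => nat_of_ord v.1.1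
  | 1 => nat_of_ord v.1.2
  | _ => nat_of_ord v.2
  end.

Definition dim (i : 'I_3) : nat :=
  match val i with 0 => n1 | 1 => n2 | _ => n3 end.

(* Direct product of complete graphs: adjacent iff differ in every coordinate. *)
Definition Kadj : rel KV := fun x y => [forall i : 'I_3, coord i x != coord i y].

Definition Kdist (x y : KV) : nat := gdist Kadj x y.

Definition resolving (W : {set KV}) : Prop :=
  forall x y : KV, x != y -> x \notin W -> y \notin W ->
    exists2 w, w \in W & Kdist x w <> Kdist y w.

Definition Wia (W : {set KV}) (i : 'I_3) (a : nat) : {set KV} :=
  [set w in W | coord i w == a].

Definition basic_landmark (W : {set KV}) : Prop :=
  [/\ (forall (i : 'I_3) a, a < dim i -> Wia W i a != set0),
      (forall (i : 'I_3) a, a < dim i -> 2 <= #|Wia W i a|) &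
      (forall (i j : 'I_3) a b, i != j -> #|Wia W i a :&: Wia W j b| <= 1)].

Definition stick (W : {set KV}) (i : 'I_3) (u v : KV) : Prop :=
  exists a, Wia W i a = [set u; v].

Definition common (W : {set KV}) (i : 'I_3) (u v : KV) : Prop :=
  exists a, u \in Wia W i a /\ v \in Wia W i a.

Definition colors3 (i j k : 'I_3) : Prop := [/\ i != j, j != k & i != k].

Definition bad4cycle (W : {set KV}) : Prop :=
  exists (w1 w2 w3 w4 : KV) (i j k : 'I_3),
    uniq [:: w1; w2; w3; w4] /\ colors3 i j k /\
    stick W i w1 w2 /\ stick W i w3 w4 /\
    common W j w2 w3 /\ common W k w4 w1.

Definition plainhex (W : {set KV}) : Prop :=
  exists (w1 w2 w3 w4 w5 w6 : KV) (i j k : 'I_3),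
    uniq [:: w1; w2; w3; w4; w5; w6] /\ colors3 i j k /\
    stick W i w1 w2 /\ stick W i w4 w5 /\
    stick W j w2 w3 /\ stick W j w5 w6 /\
    stick W k w3 w4 /\ stick W k w6 w1.

Definition rainbow22 (W : {set KV}) (i j k : 'I_3) (w1 w2 w3 : KV) : Prop :=
  uniq [:: w1; w2; w3] /\ colors3 i j k /\
  stick W i w1 w2 /\ stick W j w2 w3 /\ common W k w1 w3.

Definition sharkteeth (W : {set KV}) : Prop :=
  exists (w1 w2 w3 u1 u2 u3 : KV) (i j k : 'I_3),
    rainbow22 W i j k w1 w2 w3 /\ rainbow22 W i j k u1 u2 u3 /\
    uniq [:: w1; w2; w3; u1; u2; u3] /\
    exists a, 3 <= #|Wia W k a| /\
      [/\ w1 \in Wia W k a, w3 \in Wia W k a, u1 \in Wia W k a & u3 \in Wia W k a].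

End Kn.

(* Main.v *)
Require Import Defs.
From mathcomp Require Import all_boot zify.
Set Implicit Arguments. Unset Strict Implicit. Unset Printing Implicit Defensive.

Definition i0 : 'I_3 := @Ordinal 3 0 isT.
Definition i1 : 'I_3 := @Ordinal 3 1 isT.
Definition i2 : 'I_3 := @Ordinal 3 2 isT.

Lemma i3_cases (m : 'I_3) : m = i0 \/ m = i1 \/ m = i2.
Proof.
case: m => [[|[|[|m]]] Hm]; first (by left; apply: val_inj);
  [by right; left; apply: val_inj | by right; right; apply: val_inj | by []].
Qed.

Lemma cover3 (i j k : 'I_3) : colors3 i j k -> forall m, m = i \/ m = j \/ m = k.
Proof.
case=> Hij Hjk Hik m.
have Hi := i3_cases i; have Hj := i3_cases j; have Hk := i3_cases k;
have Hm := i3_cases m.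
by case: Hi Hj Hk Hm Hij Hjk Hik => [->|[->|->]] [->|[->|->]] [->|[->|->]] [->|[->|->]];
  rewrite ?eqxx //; auto.
Qed.

Lemma pick_ok d a b : 3 <= d ->
  let c := if (0 != a) && (0 != b) then 0 else if (1 != a) && (1 != b) then 1 else 2 in
  [/\ c < d, c != a & c != b].
Proof.
move=> hd /=.
case: (boolP ((0 != a) && (0 != b))) => [H|H]; first by split => //; lia.
case: (boolP ((1 != a) && (1 != b))) => [H'|H']; first by split => //; lia.
move: H H'; rewrite !negb_and !negbK => H H'; split; lia.
Qed.

Section K.
Variables n1 n2 n3 : nat.
Hypotheses (h1 : 3 <= n1) (h2 : 3 <= n2) (h3 : 3 <= n3).
Local Notation T := (KV n1 n2 n3).

Lemma dim_ge3 m : 3 <= dim n1 n2 n3 m.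
Proof. by case: (i3_cases m) => [->|[->|->]]. Qed.

Lemma coord_lt m (v : T) : coord m v < dim n1 n2 n3 m.
Proof. by case: (i3_cases m) => [->|[->|->]]; rewrite /coord /dim /=. Qed.

Lemma coord_inj (u v : T) : (forall m, coord m u = coord m v) -> u = v.
Proof.
case: u => [[a b] c]; case: v => [[a' b'] c'] H.
have := H i0; have := H i1; have := H i2; rewrite /coord /= => e2 e1 e0.
by congr (_, _, _); apply: val_inj.
Qed.

Lemma exists_vertex (f : 'I_3 -> nat) : (forall m, f m < dim n1 n2 n3 m) ->
  exists v : T, forall m, coord m v = f m.
Proof.
move=> H.
exists ((@Ordinal n1 (f i0) (H i0), @Ordinal n2 (f i1) (H i1)), @Ordinal n3 (f i2) (H i2)).
by move=> m; case: (i3_cases m) => [->|[->|->]].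
Qed.

Lemma common_nb (u v : T) : exists z, (@Kadj n1 n2 n3) u z && (@Kadj n1 n2 n3) z v.
Proof.
pose f m := let a := coord m u in let b := coord m v in
  if (0 != a) && (0 != b) then 0 else if (1 != a) && (1 != b) then 1 else 2.
have hf m : [/\ f m < dim n1 n2 n3 m, f m != coord m u & f m != coord m v].
  exact: (pick_ok (coord m u) (coord m v) (dim_ge3 m)).
have hf1 m : f m < dim n1 n2 n3 m by case: (hf m).
have [z hz] := exists_vertex hf1.
exists z; apply/andP; split; apply/forallP => m; rewrite hz.
  by case: (hf m) => _ ? _; rewrite eq_sym.
by case: (hf m).
Qed.

Lemma card_T : 3 <= #|{: 'I_n1 * 'I_n2 * 'I_n3}|.
Proof. rewrite !card_prod !card_ord. nia. Qed.

Definition share (x w : T) := [exists m, coord m x == coord m w].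

Lemma walkn1 (a b : T) : walkn (@Kadj n1 n2 n3) 1 a b = (@Kadj n1 n2 n3) a b.
Proof.
apply/existsP/idP => [[z /andP[h /eqP <-]]|h] //.
by exists b; rewrite h eqxx.
Qed.

Lemma Kdist_ne (x w : T) : x != w -> Kdist x w = if share x w then 2 else 1.
Proof.
move=> ne; rewrite /Kdist /gdist.
have [k ->] : exists k, #|{: 'I_n1 * 'I_n2 * 'I_n3}| = k.+3 by exists (#|{: 'I_n1 * 'I_n2 * 'I_n3}| - 3); have := card_T; lia.
have W2 : walkn (@Kadj n1 n2 n3) 2 x w.
  have [z /andP[hz1 hz2]] := common_nb x w.
  by apply/existsP; exists z; rewrite hz1 /=; apply/existsP; exists w; rewrite hz2 eqxx.
have W1 := walkn1 x w; move: W1 W2 => /= -> ->; rewrite (negbTE ne).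
rewrite /Kadj /share -[[forall i, _]]negbK negb_forall.
have -> : [exists x0, ~~ (coord x0 x != coord x0 w)] = [exists m, coord m x == coord m w] by apply: eq_existsb => m; rewrite negbK.
by case: [exists m, _].
Qed.

Lemma card1_eq (A B : {set T}) u v :
  #|A :&: B| <= 1 -> u \in A -> u \in B -> v \in A -> v \in B -> u = v.
Proof.
move=> h uA uB vA vB; apply/eqP; apply: contraLR h => ne.
rewrite -ltnNge.
have : [set u; v] \subset A :&: B.
  by apply/subsetP => z; rewrite !inE => /orP[] /eqP ->; rewrite ?uA ?uB ?vA ?vB.
by move/subset_leq_card; rewrite cards2 ne.
Qed.

Lemma pair_lemma (A P Q : {set T}) :
  2 <= #|A| -> (forall w, w \in A -> (w \in P) || (w \in Q)) ->
  #|A :&: P| <= 1 -> #|A :&: Q| <= 1 ->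
  exists p q, [/\ A = [set p; q], p \in P, q \in Q & p != q].
Proof.
move=> hA hcov hP hQ.
have eA : A = (A :&: P) :|: (A :&: Q).
  apply/setP => w; rewrite !inE; case: (boolP (w \in A)) => //= wA; by rewrite (hcov w wA).
have hc : #|A| <= #|A :&: P| + #|A :&: Q| by rewrite {1}eA; exact: leq_card_setU.
have /cards1P [p ep] : #|A :&: P| == 1 by apply/eqP; lia.
have /cards1P [q eq] : #|A :&: Q| == 1 by apply/eqP; lia.
have : p \in A :&: P by rewrite ep set11.
have : q \in A :&: Q by rewrite eq set11.
rewrite !inE => /andP[_ qQ] /andP[_ pP].
exists p, q; split => //.
  by rewrite eA ep eq.
apply/eqP => epq; move: hA; rewrite eA ep eq epq setUid cards1.
by [].
Qed.

Lemma card3 (A : {set T}) a b c : a \in A -> b \in A -> c \in A ->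
  a != b -> a != c -> b != c -> 3 <= #|A|.
Proof.
move=> aA bA cA ab ac bc.
have /card_uniqP e : uniq [:: a; b; c] by rewrite /= !inE negb_or ab ac bc.
rewrite -[3]/(size [:: a; b; c]) -e; apply: subset_leq_card; apply/subsetP => z.
by rewrite !inE => /or3P[]/eqP->.
Qed.

Section WS.
Variable W : {set T}.
Hypothesis HW : basic_landmark W.

Lemma inWia (w : T) m a : (w \in Wia W m a) = (w \in W) && (coord m w == a).
Proof. by rewrite inE. Qed.

Lemma eqWia (w : T) m a : w \in W -> (coord m w == a) = (w \in Wia W m a).
Proof. by move=> wW; rewrite inWia wW. Qed.

Lemma Wia_card2 (v : T) m : 2 <= #|Wia W m (coord m v)|.
Proof. case: HW => _ H _; exact: H (coord_lt m v). Qed.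

Lemma Wia_cap m m' a b : m != m' -> #|Wia W m a :&: Wia W m' b| <= 1.
Proof. case: HW => _ _ H; exact: H. Qed.

Lemma Wia_lt (w : T) m a : w \in Wia W m a -> a < dim n1 n2 n3 m.
Proof. rewrite inWia => /andP[_ /eqP <-]; exact: coord_lt. Qed.

Lemma Wia_W (w : T) m a : w \in Wia W m a -> w \in W.
Proof. by rewrite inWia => /andP[]. Qed.

Lemma share3 i j k (x w : T) : colors3 i j k ->
  share x w = [|| coord i w == coord i x, coord j w == coord j x | coord k w == coord k x].
Proof.
move=> c; apply/existsP/idP => [[m]|].
  by rewrite eq_sym; case: (cover3 c m) => [->|[->|->]] ->; rewrite ?orbT.
by case/or3P => h; [exists i|exists j|exists k]; rewrite eq_sym.
Qed.

Definition resolving' := forall x y : T, x != y -> x \notin W -> y \notin W ->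
  exists2 w, w \in W & share x w != share y w.

Lemma resolvingE : resolving W <-> resolving'.
Proof.
have key x y w : x \notin W -> y \notin W -> w \in W ->
   (Kdist x w <> Kdist y w) <-> (share x w != share y w).
  move=> xW yW wW.
  have nx : x != w by apply: contraNneq xW => ->.
  have ny : y != w by apply: contraNneq yW => ->.
  rewrite (Kdist_ne nx) (Kdist_ne ny).
  by case: (share x w); case: (share y w); split => //; move/(_ erefl).
split=> H x y ne xW yW; have [w wW hw] := H x y ne xW yW; exists w => //;
  exact/(key _ _ _ xW yW wW).
Qed.

Lemma cover_gen (a b : T) : (forall w, w \in W -> share a w = share b w) ->
  forall m w, w \in Wia W m (coord m a) -> exists m', w \in Wia W m' (coord m' b).
Proof.
move=> H m w; rewrite inWia => /andP[wW /eqP e].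
have : share a w by apply/existsP; exists m; rewrite e.
rewrite H // => /existsP[m' hm']; exists m'; by rewrite inWia wW eq_sym.
Qed.

Lemma triple (a w : T) i j k : a \notin W -> colors3 i j k ->
  w \in Wia W i (coord i a) -> w \in Wia W j (coord j a) -> w \in Wia W k (coord k a) -> False.
Proof.
move=> aW c; rewrite !inWia => /andP[wW /eqP ei] /andP[_ /eqP ej] /andP[_ /eqP ek].
have e : w = a by apply: coord_inj => m; case: (cover3 c m) => [->|[->|->]].
by subst w; rewrite wW in aW.
Qed.

Lemma disj (w : T) m a b : a != b -> w \in Wia W m a -> w \in Wia W m b -> False.
Proof.
move=> ne; rewrite !inWia => /andP[_ /eqP e1] /andP[_ /eqP e2].
by rewrite -e1 -e2 eqxx in ne.
Qed.

Lemma neqD (w w' : T) m a b : a != b -> w \in Wia W m a -> w' \in Wia W m b -> w != w'.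
Proof. move=> ne h h'; apply/eqP => e; subst w'; exact: (disj ne h h'). Qed.


Section Fwd.
Variables x y : T.
Hypotheses (xW : x \notin W) (yW : y \notin W).
Hypothesis Hsh : forall w, w \in W -> share x w = share y w.
Local Notation X m := (Wia W m (coord m x)).
Local Notation Y m := (Wia W m (coord m y)).

Lemma Hsh' w : w \in W -> share y w = share x w.
Proof. by move=> h; rewrite Hsh. Qed.

Lemma coverX i j k m w : colors3 i j k -> w \in X m -> [\/ w \in Y i, w \in Y j | w \in Y k].
Proof.
move=> c hw; have [m' hm] := cover_gen Hsh hw.
by case: (cover3 c m') => [e|[e|e]]; subst m'; [constructor 1|constructor 2|constructor 3].
Qed.

Lemma coverY i j k m w : colors3 i j k -> w \in Y m -> [\/ w \in X i, w \in X j | w \in X k].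
Proof.
move=> c hw; have [m' hm] := cover_gen Hsh' hw.
by case: (cover3 c m') => [e|[e|e]]; subst m'; [constructor 1|constructor 2|constructor 3].
Qed.

Ltac memb e := by rewrite e !inE eqxx ?orbT.
Ltac neqs := rewrite /= !inE !negb_or; repeat (apply/andP; split); try done; try (rewrite eq_sym; done).

Lemma L1 i j k : colors3 i j k -> coord i x != coord i y ->
  coord j x = coord j y -> coord k x = coord k y -> bad4cycle W.
Proof.
move=> c di ej ek; have c' := c; case: c' => cij cjk cik.
have di' : coord i y != coord i x by rewrite eq_sym.
have [u [v [eX uj vk nuv]]] : exists u v, [/\ X i = [set u; v], u \in X j, v \in X k & u != v].
  apply: pair_lemma; [exact: Wia_card2 | | exact: Wia_cap | exact: Wia_cap].
  move=> w hw; case: (coverX c hw) => h.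
  - by case: (disj di hw h).
  - by rewrite ej h.
  - by rewrite ek h orbT.
have [u' [v' [eY uj' vk' nuv']]] : exists u v, [/\ Y i = [set u; v], u \in X j, v \in X k & u != v].
  apply: pair_lemma; [exact: Wia_card2 | | exact: Wia_cap | exact: Wia_cap].
  move=> w hw; case: (coverY c hw) => h.
  - by case: (disj di' hw h).
  - by rewrite h.
  - by rewrite h orbT.
have uXi : u \in X i by memb eX.
have vXi : v \in X i by memb eX.
have uYi : u' \in Y i by memb eY.
have vYi : v' \in Y i by memb eY.
exists v, u, u', v', i, j, k; split; last split => //.
  rewrite /= !inE !negb_or (neqD di vXi uYi) (neqD di vXi vYi) (neqD di uXi uYi)
     (neqD di uXi vYi) nuv' eq_sym nuv.
  by [].
split; first by exists (coord i x); rewrite eX setUC.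
split; first by exists (coord i y); rewrite eY.
split; first by exists (coord j x).
by exists (coord k x).
Qed.


Lemma L2 i j k : colors3 i j k -> coord i x != coord i y ->
  coord j x != coord j y -> coord k x = coord k y -> sharkteeth W.
Proof.
move=> c di dj ek; have c' := c; case: c' => cij cjk cik.
have cji : j != i by rewrite eq_sym.
have di' : coord i y != coord i x by rewrite eq_sym.
have dj' : coord j y != coord j x by rewrite eq_sym.
have [p [q [eXi pYj qXk npq]]] : exists u v, [/\ X i = [set u; v], u \in Y j, v \in X k & u != v].
  apply: pair_lemma; [exact: Wia_card2 | | exact: Wia_cap | exact: Wia_cap].
  move=> w hw; case: (coverX c hw) => h.
  - by case: (disj di hw h).
  - by rewrite h.
  - by rewrite ek h orbT.
have [r [s [eXj rYi sXk nrs]]] : exists u v, [/\ X j = [set u; v], u \in Y i, v \in X k & u != v].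
  apply: pair_lemma; [exact: Wia_card2 | | exact: Wia_cap | exact: Wia_cap].
  move=> w hw; case: (coverX c hw) => h.
  - by rewrite h.
  - by case: (disj dj hw h).
  - by rewrite ek h orbT.
have [r' [s' [eYi rXj sXk' nrs']]] : exists u v, [/\ Y i = [set u; v], u \in X j, v \in X k & u != v].
  apply: pair_lemma; [exact: Wia_card2 | | exact: Wia_cap | exact: Wia_cap].
  move=> w hw; case: (coverY c hw) => h.
  - by case: (disj di' hw h).
  - by rewrite h.
  - by rewrite h orbT.
have [p' [q' [eYj pXi qXk' npq']]] : exists u v, [/\ Y j = [set u; v], u \in X i, v \in X k & u != v].
  apply: pair_lemma; [exact: Wia_card2 | | exact: Wia_cap | exact: Wia_cap].
  move=> w hw; case: (coverY c hw) => h.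
  - by rewrite h.
  - by case: (disj dj' hw h).
  - by rewrite h orbT.
have pXi' : p \in X i by memb eXi.
have qXi : q \in X i by memb eXi.
have pYj' : p' \in Y j by memb eYj.
have qYj : q' \in Y j by memb eYj.
have rXj' : r \in X j by memb eXj.
have sXj : s \in X j by memb eXj.
have rYi' : r' \in Y i by memb eYi.
have sYi : s' \in Y i by memb eYi.
have epp : p' = p by apply: (card1_eq (Wia_cap _ _ cij) pXi pYj' pXi' pYj).
have err : r' = r by apply: (card1_eq (Wia_cap _ _ cji) rXj rYi' rXj' rYi).
subst p' r'.
have n_qq' : q != q'.
  apply/eqP => e; subst q'.
  by move/eqP: npq; apply; apply: (card1_eq (Wia_cap _ _ cij) pXi' pYj qXi qYj).
have n_qs' : q != s' by apply: (neqD di qXi sYi).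
have n_qr : q != r by apply: (neqD di qXi rYi).
have n_qs : q != s.
  by apply/eqP => e; subst s; case: (triple xW c qXi sXj qXk).
have n_ps' : p != s' by apply: (neqD di pXi' sYi).
have n_pr : p != r by apply: (neqD di pXi' rYi).
have n_ps : p != s by rewrite eq_sym; apply: (neqD dj sXj pYj).
have n_q's' : q' != s'.
  apply/eqP => e; subst s'.
  by case: (triple yW c sYi qYj); rewrite -ek.
have n_q'r : q' != r by rewrite eq_sym; apply: (neqD dj rXj' qYj).
have n_q's : q' != s by rewrite eq_sym; apply: (neqD dj sXj qYj).
have n_s's : s' != s.
  apply/eqP => e; subst s'.
  by move/eqP: nrs; apply; apply: (card1_eq (Wia_cap _ _ cji) rXj' rYi sXj sYi).
exists q, p, q', s', r, s, i, j, k.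
split.
  split; first by neqs.
  split => //; split; first by exists (coord i x); rewrite eXi setUC.
  split; first by exists (coord j y); rewrite eYj.
  by exists (coord k x).
split.
  split; first by neqs.
  split => //; split; first by exists (coord i y); rewrite eYi setUC.
  split; first by exists (coord j x); rewrite eXj.
  by exists (coord k x).
split.
  by neqs.
exists (coord k x); split.
  exact: (card3 qXk qXk' sXk n_qq' n_qs n_q's).
by split.
Qed.

Lemma L3 i j k : colors3 i j k -> coord i x != coord i y ->
  coord j x != coord j y -> coord k x != coord k y -> plainhex W.
Proof.
move=> c di dj dk; have c' := c; case: c' => cij cjk cik.
have cji : j != i by rewrite eq_sym.
have ckj : k != j by rewrite eq_sym.
have cki : k != i by rewrite eq_sym.
have di' : coord i y != coord i x by rewrite eq_sym.
have dj' : coord j y != coord j x by rewrite eq_sym.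
have dk' : coord k y != coord k x by rewrite eq_sym.
have [aij [aik [eXi k1 k2 n1']]] : exists u v, [/\ X i = [set u; v], u \in Y j, v \in Y k & u != v].
  apply: pair_lemma; [exact: Wia_card2 | | exact: Wia_cap | exact: Wia_cap].
  move=> w hw; case: (coverX c hw) => h; [by case: (disj di hw h) | by rewrite h | by rewrite h orbT].
have [aji [ajk [eXj k3 k4 n2']]] : exists u v, [/\ X j = [set u; v], u \in Y i, v \in Y k & u != v].
  apply: pair_lemma; [exact: Wia_card2 | | exact: Wia_cap | exact: Wia_cap].
  move=> w hw; case: (coverX c hw) => h; [by rewrite h | by case: (disj dj hw h) | by rewrite h orbT].
have [aki [akj [eXk k5 k6 n3']]] : exists u v, [/\ X k = [set u; v], u \in Y i, v \in Y j & u != v].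
  apply: pair_lemma; [exact: Wia_card2 | | exact: Wia_cap | exact: Wia_cap].
  move=> w hw; case: (coverX c hw) => h; [by rewrite h | by rewrite h orbT | by case: (disj dk hw h)].
have [bij [bik [eYi g1 g2 m1]]] : exists u v, [/\ Y i = [set u; v], u \in X j, v \in X k & u != v].
  apply: pair_lemma; [exact: Wia_card2 | | exact: Wia_cap | exact: Wia_cap].
  move=> w hw; case: (coverY c hw) => h; [by case: (disj di' hw h) | by rewrite h | by rewrite h orbT].
have [bji [bjk [eYj g3 g4 m2]]] : exists u v, [/\ Y j = [set u; v], u \in X i, v \in X k & u != v].
  apply: pair_lemma; [exact: Wia_card2 | | exact: Wia_cap | exact: Wia_cap].
  move=> w hw; case: (coverY c hw) => h; [by rewrite h | by case: (disj dj' hw h) | by rewrite h orbT].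
have [bki [bkj [eYk g5 g6 m3]]] : exists u v, [/\ Y k = [set u; v], u \in X i, v \in X j & u != v].
  apply: pair_lemma; [exact: Wia_card2 | | exact: Wia_cap | exact: Wia_cap].
  move=> w hw; case: (coverY c hw) => h; [by rewrite h | by rewrite h orbT | by case: (disj dk' hw h)].
have x1 : aij \in X i by memb eXi.
have x2 : aik \in X i by memb eXi.
have x3 : aji \in X j by memb eXj.
have x4 : ajk \in X j by memb eXj.
have x5 : aki \in X k by memb eXk.
have x6 : akj \in X k by memb eXk.
have y1 : bij \in Y i by memb eYi.
have y2 : bik \in Y i by memb eYi.
have y3 : bji \in Y j by memb eYj.
have y4 : bjk \in Y j by memb eYj.
have y5 : bki \in Y k by memb eYk.
have y6 : bkj \in Y k by memb eYk.
have e1 : bij = aji by apply: (card1_eq (Wia_cap _ _ cji) g1 y1 x3 k3).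
have e2 : bik = aki by apply: (card1_eq (Wia_cap _ _ cki) g2 y2 x5 k5).
have e3 : bji = aij by apply: (card1_eq (Wia_cap _ _ cij) g3 y3 x1 k1).
have e4 : bjk = akj by apply: (card1_eq (Wia_cap _ _ ckj) g4 y4 x6 k6).
have e5 : bki = aik by apply: (card1_eq (Wia_cap _ _ cik) g5 y5 x2 k2).
have e6 : bkj = ajk by apply: (card1_eq (Wia_cap _ _ cjk) g6 y6 x4 k4).
subst bij bik bji bjk bki bkj.
exists aik, aij, akj, aki, aji, ajk, i, j, k.
split.
  have := neqD dk x6 k2; have := neqD di x2 k5; have := neqD di x2 k3;
  have := neqD di x1 k5; have := neqD di x1 k3; have := neqD dj x4 k1;
  have := neqD dj x3 k6; have := neqD dk x6 k4; have := neqD dk x5 k4.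
  move=> *; by neqs.
split => //.
split; first by exists (coord i x); rewrite eXi setUC.
split; first by exists (coord i y); rewrite eYi setUC.
split; first by exists (coord j y); rewrite eYj.
split; first by exists (coord j x); rewrite eXj.
split; first by exists (coord k x); rewrite eXk setUC.
by exists (coord k y); rewrite eYk setUC.
Qed.

End Fwd.

Lemma mkvert i j k a b c : colors3 i j k -> a < dim n1 n2 n3 i -> b < dim n1 n2 n3 j ->
  c < dim n1 n2 n3 k -> exists v : T, [/\ coord i v = a, coord j v = b & coord k v = c].
Proof.
move=> cc ha hb hc; case: (cc) => cij cjk cik.
have nji : (j == i) = false by rewrite eq_sym; exact: negbTE.
have nki : (k == i) = false by rewrite eq_sym; exact: negbTE.
have nkj : (k == j) = false by rewrite eq_sym; exact: negbTE.
pose f m := if m == i then a else if m == j then b else c.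
have hf m : f m < dim n1 n2 n3 m.
  by rewrite /f; case: (cover3 cc m) => [->|[->|->]]; rewrite ?eqxx ?nji ?nki ?nkj.
have [v hv] := exists_vertex hf.
by exists v; rewrite !hv /f ?eqxx ?nji ?nki ?nkj.
Qed.

Lemma coordW (w : T) m a : w \in Wia W m a -> coord m w == a.
Proof. by rewrite inWia => /andP[]. Qed.

Ltac uniq_contra U := move: U; rewrite /= !inE ?eqxx ?orbT ?orTb /= ?andbF //.

Lemma bad_not_res : resolving' -> ~ bad4cycle W.
Proof.
move=> R [w1 [w2 [w3 [w4 [i [j [k [U [cc [[a ea] [[a' ea'] [[b [hb2 hb3]] [c [hc4 hc1]]]]]]]]]]]]]].
have m1 : w1 \in Wia W i a by rewrite ea !inE eqxx.
have m2 : w2 \in Wia W i a by rewrite ea !inE eqxx orbT.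
have m3 : w3 \in Wia W i a' by rewrite ea' !inE eqxx.
have m4 : w4 \in Wia W i a' by rewrite ea' !inE eqxx orbT.
have [x [xi xj xk]] := mkvert cc (Wia_lt m1) (Wia_lt hb2) (Wia_lt hc1).
have [y [yi yj yk]] := mkvert cc (Wia_lt m3) (Wia_lt hb2) (Wia_lt hc1).
case: cc => cij cjk cik.
have nxy : x != y.
  apply/eqP => exy; have eaa : a = a' by rewrite -xi -yi exy.
  move: m1; rewrite eaa ea' !inE => /orP[]/eqP e; subst w1; uniq_contra U.
have xW : x \notin W.
  apply/negP => xW; have : x \in Wia W i a by rewrite inWia xW xi eqxx.
  rewrite ea !inE => /orP[]/eqP e; subst x.
    have : w1 \in Wia W j b by rewrite inWia xW xj eqxx.
    move=> h; have e := card1_eq (Wia_cap a b cij) m1 h m2 hb2; subst w2; uniq_contra U.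
  have : w2 \in Wia W k c by rewrite inWia xW xk eqxx.
  move=> h; have e := card1_eq (Wia_cap a c cik) m1 hc1 m2 h; subst w2; uniq_contra U.
have yW : y \notin W.
  apply/negP => yW; have : y \in Wia W i a' by rewrite inWia yW yi eqxx.
  rewrite ea' !inE => /orP[]/eqP e; subst y.
    have : w3 \in Wia W k c by rewrite inWia yW yk eqxx.
    move=> h; have e := card1_eq (Wia_cap a' c cik) m3 h m4 hc4; subst w4; uniq_contra U.
  have : w4 \in Wia W j b by rewrite inWia yW yj eqxx.
  move=> h; have e := card1_eq (Wia_cap a' b cij) m3 hb3 m4 h; subst w4; uniq_contra U.
have [w wW] := R x y nxy xW yW; apply/negP; rewrite negbK.
have cc : colors3 i j k by [].
rewrite (share3 _ _ cc) (share3 y _ cc) xi xj xk yi yj yk.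
have f1 : (coord i w == a) ==> ((coord j w == b) || (coord k w == c)).
  apply/implyP => /eqP ei; have : w \in Wia W i a by rewrite inWia wW ei eqxx.
  by rewrite ea !inE => /orP[]/eqP->; rewrite ?(coordW hb2) ?(coordW hc1) ?orbT.
have f2 : (coord i w == a') ==> ((coord j w == b) || (coord k w == c)).
  apply/implyP => /eqP ei; have : w \in Wia W i a' by rewrite inWia wW ei eqxx.
  by rewrite ea' !inE => /orP[]/eqP->; rewrite ?(coordW hb3) ?(coordW hc4) ?orbT.
move: f1 f2; case: (coord i w == a); case: (coord i w == a'); case: (coord j w == b);
  by case: (coord k w == c).
Qed.


Lemma hex_not_res : resolving' -> ~ plainhex W.
Proof.
move=> R [w1 [w2 [w3 [w4 [w5 [w6 [i [j [k [U [cc [[a1 e1] [[a2 e2] [[b1 e3] [[b2 e4] [[c1 e5] [c2 e6]]]]]]]]]]]]]]]]].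
have m1 : w1 \in Wia W i a1 by rewrite e1 !inE eqxx.
have m4 : w4 \in Wia W i a2 by rewrite e2 !inE eqxx.
have m2 : w2 \in Wia W j b1 by rewrite e3 !inE eqxx.
have m5 : w5 \in Wia W j b2 by rewrite e4 !inE eqxx.
have m3 : w3 \in Wia W k c1 by rewrite e5 !inE eqxx.
have m6 : w6 \in Wia W k c2 by rewrite e6 !inE eqxx.
have [x [xi xj xk]] := mkvert cc (Wia_lt m1) (Wia_lt m5) (Wia_lt m3).
have [y [yi yj yk]] := mkvert cc (Wia_lt m4) (Wia_lt m2) (Wia_lt m6).
have nxy : x != y.
  apply/eqP => exy; have eaa : a1 = a2 by rewrite -xi -yi exy.
  move: m1; rewrite eaa e2 !inE => /orP[]/eqP e; subst w1; uniq_contra U.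
have xW : x \notin W.
  apply/negP => xW.
  have : x \in Wia W i a1 by rewrite inWia xW xi eqxx.
  have : x \in Wia W j b2 by rewrite inWia xW xj eqxx.
  rewrite e1 e4 !inE => /orP[]/eqP -> /orP[]/eqP e; subst; uniq_contra U.
have yW : y \notin W.
  apply/negP => yW.
  have : y \in Wia W i a2 by rewrite inWia yW yi eqxx.
  have : y \in Wia W j b1 by rewrite inWia yW yj eqxx.
  rewrite e2 e3 !inE => /orP[]/eqP -> /orP[]/eqP e; subst; uniq_contra U.
have [w wW] := R x y nxy xW yW; apply/negP; rewrite negbK.
rewrite (share3 _ _ cc) (share3 y _ cc) xi xj xk yi yj yk !(eqWia _ _ wW).
rewrite e1 e2 e3 e4 e5 e6 !inE.
by apply/eqP; do 6!(case: eqP => _).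
Qed.

Lemma shark_not_res : resolving' -> ~ sharkteeth W.
Proof.
move=> R [w1 [w2 [w3 [u1 [u2 [u3 [i [j [k [[_ [cc [[a1 e1] [[b1 e2] _]]]] [[_ [_ [[a2 e3] [[b2 e4] _]]]] [U [a [_ [hw1 hw3 hu1 hu3]]]]]]]]]]]]]]].
have m1 : w1 \in Wia W i a1 by rewrite e1 !inE eqxx.
have m2 : u1 \in Wia W i a2 by rewrite e3 !inE eqxx.
have m3 : w2 \in Wia W j b1 by rewrite e2 !inE eqxx.
have m4 : u2 \in Wia W j b2 by rewrite e4 !inE eqxx.
have [x [xi xj xk]] := mkvert cc (Wia_lt m1) (Wia_lt m4) (Wia_lt hw1).
have [y [yi yj yk]] := mkvert cc (Wia_lt m2) (Wia_lt m3) (Wia_lt hw1).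
have nxy : x != y.
  apply/eqP => exy; have eaa : a1 = a2 by rewrite -xi -yi exy.
  move: m1; rewrite eaa e3 !inE => /orP[]/eqP e; subst w1; uniq_contra U.
have xW : x \notin W.
  apply/negP => xW.
  have : x \in Wia W i a1 by rewrite inWia xW xi eqxx.
  have : x \in Wia W j b2 by rewrite inWia xW xj eqxx.
  rewrite e1 e4 !inE => /orP[]/eqP -> /orP[]/eqP e; subst; uniq_contra U.
have yW : y \notin W.
  apply/negP => yW.
  have : y \in Wia W i a2 by rewrite inWia yW yi eqxx.
  have : y \in Wia W j b1 by rewrite inWia yW yj eqxx.
  rewrite e3 e2 !inE => /orP[]/eqP -> /orP[]/eqP e; subst; uniq_contra U.
have [w wW] := R x y nxy xW yW; apply/negP; rewrite negbK.
rewrite (share3 _ _ cc) (share3 y _ cc) xi xj xk yi yj yk !(eqWia _ _ wW).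
rewrite e1 e2 e3 e4.
case hK : (w \in Wia W k a); first by rewrite !orbT.
have f1 : (w == w1) = false by apply/negbTE/eqP => e; subst w; rewrite hw1 in hK.
have f2 : (w == w3) = false by apply/negbTE/eqP => e; subst w; rewrite hw3 in hK.
have f3 : (w == u1) = false by apply/negbTE/eqP => e; subst w; rewrite hu1 in hK.
have f4 : (w == u3) = false by apply/negbTE/eqP => e; subst w; rewrite hu3 in hK.
rewrite !inE f1 f2 f3 f4.
by apply/eqP; do 2!(case: eqP => _).
Qed.

Lemma no_config_resolving : ~ bad4cycle W -> ~ plainhex W -> ~ sharkteeth W -> resolving'.
Proof.
move=> nb nh ns x y ne xW yW.
case: (boolP [exists w in W, share x w != share y w]) => [/existsP[w /andP[wW h]]|H];
  first by exists w.
exfalso.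
have Hsh w : w \in W -> share x w = share y w.
  move=> wW; move: H; rewrite negb_exists => /forallP/(_ w).
  by rewrite wW /= negbK => /eqP.
have c012 : colors3 i0 i1 i2 by split; apply/eqP => /(congr1 val).
have c102 : colors3 i1 i0 i2 by split; apply/eqP => /(congr1 val).
have c201 : colors3 i2 i0 i1 by split; apply/eqP => /(congr1 val).
have c021 : colors3 i0 i2 i1 by split; apply/eqP => /(congr1 val).
have c120 : colors3 i1 i2 i0 by split; apply/eqP => /(congr1 val).
case E0: (coord i0 x == coord i0 y); case E1: (coord i1 x == coord i1 y);
  case E2: (coord i2 x == coord i2 y).
- move/eqP: ne; apply; apply: coord_inj => m.
  by case: (i3_cases m) => [->|[->|->]]; apply/eqP.
- by apply: nb; apply: (L1 Hsh c201); rewrite ?E2 //; apply/eqP.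
- by apply: nb; apply: (L1 Hsh c102); rewrite ?E1 //; apply/eqP.
- by apply: ns; apply: (L2 xW yW Hsh c120); rewrite ?E1 ?E2 //; apply/eqP.
- by apply: nb; apply: (L1 Hsh c012); rewrite ?E0 //; apply/eqP.
- by apply: ns; apply: (L2 xW yW Hsh c021); rewrite ?E0 ?E2 //; apply/eqP.
- by apply: ns; apply: (L2 xW yW Hsh c012); rewrite ?E0 ?E1 //; apply/eqP.
- by apply: nh; apply: (L3 Hsh c012); rewrite ?E0 ?E1 ?E2.
Qed.

End WS.
End K.

Theorem mainTheorem2 (n1 n2 n3 : nat) :
  3 <= n1 -> 3 <= n2 -> n1 <= n3 -> n2 <= n3 ->
  forall W : {set KV n1 n2 n3}, basic_landmark W ->
    (resolving W <-> (~ bad4cycle W /\ ~ plainhex W /\ ~ sharkteeth W)).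
Proof.
move=> h1 h2 h13 h23 W HW.
have h3 : 3 <= n3 by apply: leq_trans h13.
rewrite (resolvingE h1 h2 h3 W); split => [R|[nb [nh ns]]].
  split; first exact: (bad_not_res HW R).
  split; first exact: (hex_not_res R).
  exact: (shark_not_res R).
exact: no_config_resolving.
Qed.
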